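(* Let $\alpha(\cdot,t)$ be a solution of the length-constrained elastic flow $$\partial_t\alpha=\Big(k_{ss}+\tfrac12k^3-\lambda(t)k\Big)\nu,\qquad \lambda(t)=\frac{-\int_\alpha k_s^2\,ds+\frac12\int_\alpha k^4\,ds}{\int_\alpha k^2\,ds},$$ with generalised Neumann boundary conditions in a cone with $\omega=\frac{\theta_1-\theta_2}{2\pi}$, and let $L_0$ be the length of the initial curve. Then, while the solution exists, $$-\frac{L_0\int_\alpha k_s^2\,ds}{(2\pi\omega)^2}\le\lambda(t)\le\frac{2L_0}{\pi}\int_\alpha k_s^2\,ds+\bar k^2.$$
   Context: The cone: fix $0\le\theta_2<\theta_1<2\pi$; its boundary consists of the open rays $\bar\gamma_i=\{(\rho\cos\theta_i,\rho\sin\theta_i):\rho>0\}$, $i=1,2$. Generalised Neumann boundary conditions: for each $t$ the curve's interior lies in the open cone between the rays, $\alpha(-1,t)\in\bar\gamma_1$, $\alpha(1,t)\in\bar\gamma_2$, the curve meets each ray perpendicularly at its endpoint, and $k_s(\pm1,t)=0$. Here $s$ is arc length, $\nu$ the outer unit normal, $k=-\langle\alpha_{ss},\nu\rangle$ the scalar curvature (so $\int_\alpha k\,ds=2\pi\omega$), $L$ the length, and $\bar k=\frac1L\int_\alpha k\,ds$. Integrals are over $\alpha(\cdot,t)$ with respect to arc length. *)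

(* Defs.v *)
From Stdlib Require Import Reals.
From Coquelicot Require Import Coquelicot.
Open Scope R_scope.

(** A time-dependent plane curve is a pair of scalar functions
    x, y : R -> R -> R, (u,t) |-> x(u,t), y(u,t), with parameter u in [-1,1]. *)

Definition pd (n m : nat) (f : R -> R -> R) : R -> R -> R :=
  fun u t => Derive_n (fun t' => Derive_n (fun u' => f u' t') n u) m t.

Definition smooth_on_rect (f : R -> R -> R) (a b c d : R) : Prop :=
  forall (n m : nat) (u t : R), a < u < b -> c < t < d ->
    ex_derive_n (fun u' => f u' t) n u /\
    ex_derive_n (fun t' => Derive_n (fun u' => f u' t') n u) m t /\
    continuous (fun p : R * R => pd n m f (fst p) (snd p)) (u, t).

Definition speed (x y : R -> R -> R) : R -> R -> R :=
  fun u t => sqrt (pd 1 0 x u t ^ 2 + pd 1 0 y u t ^ 2).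

Definition Ds (x y : R -> R -> R) (g : R -> R -> R) : R -> R -> R :=
  fun u t => Derive (fun u' => g u' t) u / speed x y u t.

(** Unit normal nu = rotation of the unit tangent tau = alpha_s by +pi/2,
    nu = (-y_s, x_s); with the orientation from the ray theta_1 to the ray
    theta_2 this is the outer normal (a circular arc about the origin has
    curvature +1/r). *)
Definition nu1 (x y : R -> R -> R) : R -> R -> R := fun u t => - Ds x y y u t.
Definition nu2 (x y : R -> R -> R) : R -> R -> R := fun u t => Ds x y x u t.

Definition curv (x y : R -> R -> R) : R -> R -> R :=
  fun u t => - (Ds x y (Ds x y x) u t * nu1 x y u t
                + Ds x y (Ds x y y) u t * nu2 x y u t).

Definition curv_s (x y : R -> R -> R) : R -> R -> R := Ds x y (curv x y).
Definition curv_ss (x y : R -> R -> R) : R -> R -> R := Ds x y (curv_s x y).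

Definition arcint (x y : R -> R -> R) (g : R -> R -> R) (t : R) : R :=
  RInt (fun u => g u t * speed x y u t) (-1) 1.

Definition len (x y : R -> R -> R) (t : R) : R :=
  RInt (fun u => speed x y u t) (-1) 1.

Definition kbar (x y : R -> R -> R) (t : R) : R :=
  arcint x y (curv x y) t / len x y t.

Definition lam (x y : R -> R -> R) (t : R) : R :=
  (- arcint x y (fun u t => curv_s x y u t ^ 2) t
   + / 2 * arcint x y (fun u t => curv x y u t ^ 4) t)
  / arcint x y (fun u t => curv x y u t ^ 2) t.

Definition in_open_cone (th1 th2 px py : R) : Prop :=
  exists rho th, 0 < rho /\ th2 < th < th1 /\ px = rho * cos th /\ py = rho * sin th.

Definition on_ray (th px py : R) : Prop :=
  exists rho, 0 < rho /\ px = rho * cos th /\ py = rho * sin th.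

Definition gen_neumann (th1 th2 : R) (x y : R -> R -> R) (t : R) : Prop :=
  (forall u, -1 < u < 1 -> in_open_cone th1 th2 (x u t) (y u t)) /\
  on_ray th1 (x (-1) t) (y (-1) t) /\
  on_ray th2 (x 1 t) (y 1 t) /\
  pd 1 0 x (-1) t * cos th1 + pd 1 0 y (-1) t * sin th1 = 0 /\
  pd 1 0 x 1 t * cos th2 + pd 1 0 y 1 t * sin th2 = 0 /\
  curv_s x y (-1) t = 0 /\
  curv_s x y 1 t = 0.

(** (x,y) is a (smooth, regular) solution on [0,T) of the length-constrained
    elastic flow  d_t alpha = (k_ss + k^3/2 - lambda k) nu  with generalised
    Neumann boundary conditions in the cone, whose winding is
    int k ds = 2 pi omega = th1 - th2. *)
Definition elastic_flow_solution (th1 th2 T : R) (x y : R -> R -> R) : Prop :=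
  (exists eps, 0 < eps /\
     smooth_on_rect x (-1 - eps) (1 + eps) (- eps) T /\
     smooth_on_rect y (-1 - eps) (1 + eps) (- eps) T) /\
  (forall u t, -1 <= u <= 1 -> 0 <= t < T -> 0 < speed x y u t) /\
  (forall u t, -1 <= u <= 1 -> 0 <= t < T ->
     let V := curv_ss x y u t + / 2 * curv x y u t ^ 3
              - lam x y t * curv x y u t in
     pd 0 1 x u t = V * nu1 x y u t /\ pd 0 1 y u t = V * nu2 x y u t) /\
  (forall t, 0 <= t < T -> gen_neumann th1 th2 x y t) /\
  (forall t, 0 <= t < T -> arcint x y (curv x y) t = th1 - th2).

(* Main.v *)
Require Import Defs.
From Stdlib Require Import Reals Lra Lia.
From Coquelicot Require Import Coquelicot.
Open Scope R_scope.

Lemma locI lo hi u : lo < u < hi -> locally u (fun v => lo < v < hi).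
Proof.
  intros [H1 H2]. apply (locally_interval _ u (Finite lo) (Finite hi)); simpl; auto.
Qed.

Fixpoint Cn (lo hi : R) (n : nat) (f : R -> R) : Prop :=
  match n with
  | O => True
  | S m => (forall u, lo < u < hi -> ex_derive f u) /\ Cn lo hi m (Derive f)
  end.

Definition Cinf lo hi f := forall n, Cn lo hi n f.

Lemma Cn_ext lo hi n : forall f g, (forall u, lo < u < hi -> f u = g u) ->
  Cn lo hi n f -> Cn lo hi n g.
Proof.
  induction n; simpl; auto. intros f g E [H1 H2]. split.
  - intros u Hu. apply ex_derive_ext_loc with f; auto.
    apply (filter_imp (fun v => lo < v < hi)); auto. apply locI; auto.
  - apply IHn with (Derive f); auto. intros u Hu. apply Derive_ext_loc.
    apply (filter_imp (fun v => lo < v < hi)); auto. apply locI; auto.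
Qed.

Lemma Cn_mono lo hi n : forall f, Cn lo hi (S n) f -> Cn lo hi n f.
Proof.
  induction n; simpl; auto. intros f [H1 H2]. split; auto.
Qed.

Lemma Cn_mono_le lo hi n m f : (m <= n)%nat -> Cn lo hi n f -> Cn lo hi m f.
Proof.
  induction 1; auto. intros H'. apply IHle. apply Cn_mono; auto.
Qed.

Lemma Cn_plus lo hi n : forall f g, Cn lo hi n f -> Cn lo hi n g ->
  Cn lo hi n (fun u => f u + g u).
Proof.
  induction n; simpl; auto. intros f g [F1 F2] [G1 G2]. split.
  - intros u Hu. apply (ex_derive_plus f g u); auto.
  - apply Cn_ext with (fun u => Derive f u + Derive g u).
    + intros u Hu. rewrite Derive_plus; auto.
    + apply IHn; auto.
Qed.

Lemma Cn_const lo hi n c : Cn lo hi n (fun _ => c).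
Proof.
  revert c; induction n; simpl; auto. intros c. split.
  - intros; apply ex_derive_const.
  - apply Cn_ext with (fun _ => 0). intros; rewrite Derive_const; auto. apply IHn.
Qed.

Lemma Cn_mult lo hi n : forall f g, Cn lo hi n f -> Cn lo hi n g ->
  Cn lo hi n (fun u => f u * g u).
Proof.
  induction n; simpl; auto. intros f g [F1 F2] [G1 G2]. split.
  - intros u Hu. apply ex_derive_mult; auto.
  - apply Cn_ext with (fun u => Derive f u * g u + f u * Derive g u).
    + intros u Hu. rewrite Derive_mult; auto.
    + apply Cn_plus; apply IHn; auto; apply (Cn_mono lo hi n); simpl; auto.
Qed.

Lemma Cn_opp lo hi n f : Cn lo hi n f -> Cn lo hi n (fun u => - f u).
Proof.
  intros H. apply Cn_ext with (fun u => (-1) * f u). intros; ring.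
  apply Cn_mult; auto. apply Cn_const.
Qed.

Lemma Cn_minus lo hi n f g : Cn lo hi n f -> Cn lo hi n g -> Cn lo hi n (fun u => f u - g u).
Proof. intros. apply Cn_plus; auto. apply Cn_opp; auto. Qed.

Lemma Cn_inv lo hi n : forall f, Cn lo hi n f -> (forall u, lo < u < hi -> f u <> 0) ->
  Cn lo hi n (fun u => / f u).
Proof.
  induction n; simpl; auto. intros f [F1 F2] Hnz. split.
  - intros u Hu. apply ex_derive_inv; auto.
  - apply Cn_ext with (fun u => - (Derive f u * (/ f u * / f u))).
    + intros u Hu. rewrite Derive_inv; auto. specialize (Hnz u Hu). field; auto.
    + apply Cn_opp. apply Cn_mult; auto. apply Cn_mult; apply IHn; auto;
      apply (Cn_mono lo hi n); simpl; auto.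
Qed.

Lemma Cn_div lo hi n f g : Cn lo hi n f -> Cn lo hi n g -> (forall u, lo < u < hi -> g u <> 0) ->
  Cn lo hi n (fun u => f u / g u).
Proof. intros. unfold Rdiv. apply Cn_mult; auto. apply Cn_inv; auto. Qed.

Lemma Cn_sqrt lo hi n : forall f, Cn lo hi n f -> (forall u, lo < u < hi -> 0 < f u) ->
  Cn lo hi n (fun u => sqrt (f u)).
Proof.
  induction n; simpl; auto. intros f [F1 F2] Hp. split.
  - intros u Hu. destruct (F1 u Hu) as [df Hd]. eexists. apply is_derive_sqrt; eauto.
  - apply Cn_ext with (fun u => Derive f u * / 2 * / sqrt (f u)).
    + intros u Hu. destruct (F1 u Hu) as [df Hd].
      symmetry. apply is_derive_unique. rewrite (is_derive_unique _ _ _ Hd).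
      replace (df * / 2 * / sqrt (f u)) with (df / (2 * sqrt (f u))).
      apply is_derive_sqrt; auto.
      field. apply Rgt_not_eq, sqrt_lt_R0; auto.
    + apply Cn_mult. apply Cn_mult; auto. apply Cn_const.
      apply Cn_inv. apply IHn; auto. apply (Cn_mono lo hi n); simpl; auto.
      intros u Hu. apply Rgt_not_eq, sqrt_lt_R0; auto.
Qed.

Lemma Cn_of_exn lo hi n : forall f, (forall m u, lo < u < hi -> ex_derive_n f m u) -> Cn lo hi n f.
Proof.
  induction n; simpl; auto. intros f H. split.
  - intros u Hu. exact (H 1%nat u Hu).
  - apply IHn. intros m u Hu. destruct m. simpl; auto.
    simpl. apply ex_derive_ext with (Derive_n f (S m)).
    intros v. replace (S m) with (m + 1)%nat by lia. rewrite <- (Derive_n_comp f m 1). reflexivity.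
    exact (H (S (S m)) u Hu).
Qed.

Lemma Cinf_ext lo hi f g : (forall u, lo < u < hi -> f u = g u) -> Cinf lo hi f -> Cinf lo hi g.
Proof. intros E H n. apply Cn_ext with f; auto. Qed.
Lemma Cinf_plus lo hi f g : Cinf lo hi f -> Cinf lo hi g -> Cinf lo hi (fun u => f u + g u).
Proof. intros F G n; apply Cn_plus; auto. Qed.
Lemma Cinf_minus lo hi f g : Cinf lo hi f -> Cinf lo hi g -> Cinf lo hi (fun u => f u - g u).
Proof. intros F G n; apply Cn_minus; auto. Qed.
Lemma Cinf_mult lo hi f g : Cinf lo hi f -> Cinf lo hi g -> Cinf lo hi (fun u => f u * g u).
Proof. intros F G n; apply Cn_mult; auto. Qed.
Lemma Cinf_opp lo hi f : Cinf lo hi f -> Cinf lo hi (fun u => - f u).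
Proof. intros F n; apply Cn_opp; auto. Qed.
Lemma Cinf_const lo hi c : Cinf lo hi (fun _ => c).
Proof. intros n; apply Cn_const. Qed.
Lemma Cinf_div lo hi f g : Cinf lo hi f -> Cinf lo hi g -> (forall u, lo < u < hi -> g u <> 0) ->
  Cinf lo hi (fun u => f u / g u).
Proof. intros F G H n; apply Cn_div; auto. Qed.
Lemma Cinf_sqrt lo hi f : Cinf lo hi f -> (forall u, lo < u < hi -> 0 < f u) ->
  Cinf lo hi (fun u => sqrt (f u)).
Proof. intros F H n; apply Cn_sqrt; auto. Qed.
Lemma Cinf_pow lo hi f k : Cinf lo hi f -> Cinf lo hi (fun u => f u ^ k).
Proof.
  intros F. induction k. simpl. apply Cinf_const.
  simpl. apply Cinf_mult; auto.
Qed.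
Lemma Cinf_Derive lo hi f : Cinf lo hi f -> Cinf lo hi (Derive f).
Proof. intros F n. exact (proj2 (F (S n))). Qed.
Lemma Cinf_ex lo hi f u : Cinf lo hi f -> lo < u < hi -> ex_derive f u.
Proof. intros F Hu. exact (proj1 (F 1%nat) u Hu). Qed.
Lemma Cinf_cont lo hi f u : Cinf lo hi f -> lo < u < hi -> continuous f u.
Proof. intros F Hu. apply (@ex_derive_continuous R_AbsRing R_NormedModule). eapply Cinf_ex; eauto. Qed.
Lemma Cinf_isd lo hi f u : Cinf lo hi f -> lo < u < hi -> is_derive f u (Derive f u).
Proof. intros F Hu. apply Derive_correct. eapply Cinf_ex; eauto. Qed.
Lemma Cinf_of_exn lo hi f : (forall m u, lo < u < hi -> ex_derive_n f m u) -> Cinf lo hi f.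
Proof. intros H n. apply Cn_of_exn; auto. Qed.
Lemma Cn_restrict lo hi lo' hi' n : lo <= lo' -> hi' <= hi -> forall f,
  Cn lo hi n f -> Cn lo' hi' n f.
Proof.
  intros H1 H2; induction n; simpl; auto. intros f [A B]; split; auto.
  intros u Hu; apply A; lra.
Qed.
Lemma Cinf_restrict lo hi lo' hi' f : lo <= lo' -> hi' <= hi -> Cinf lo hi f -> Cinf lo' hi' f.
Proof. intros H1 H2 F n. eapply Cn_restrict; eauto. Qed.

Lemma cont_to_2d (g : R -> R -> R) u t :
  continuous (fun p : R * R => g (fst p) (snd p)) (u, t) ->
  continuity_2d_pt (fun t' u' => g u' t') t u.
Proof.
  intros H eps.
  assert (HP : locally (g u t) (fun v => Rabs (v - g u t) < eps)).
  { exists eps. intros y Hy. exact Hy. }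
  destruct (H _ HP) as [d Hd]. exists d. intros t' u' H1 H2.
  apply (Hd (u', t')). split; simpl; [exact H2 | exact H1].
Qed.

Lemma cont_to_1d (g : R -> R -> R) u t :
  continuous (fun p : R * R => g (fst p) (snd p)) (u, t) ->
  continuous (fun u' => g u' t) u.
Proof.
  intros H P HP. destruct (H P HP) as [d Hd]. exists d. intros y Hy.
  apply (Hd (y, t)). split; simpl; [exact Hy | apply ball_center].
Qed.

Lemma cont_to_1d_t (g : R -> R -> R) u t :
  continuous (fun p : R * R => g (fst p) (snd p)) (u, t) ->
  continuous (fun t' => g u t') t.
Proof.
  intros H P HP. destruct (H P HP) as [d Hd]. exists d. intros y Hy.
  apply (Hd (u, y)). split; simpl; [apply ball_center | exact Hy].
Qed.

Lemma exR (f : R -> R) a b : (forall z, Rmin a b <= z <= Rmax a b -> continuous f z) -> ex_RInt f a b.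
Proof. apply (@ex_RInt_continuous R_CompleteNormedModule). Qed.

Lemma RInt_plusR (f g : R -> R) a b : ex_RInt f a b -> ex_RInt g a b ->
  RInt (fun x => f x + g x) a b = RInt f a b + RInt g a b.
Proof. intros. apply (RInt_plus f g a b); auto. Qed.

Lemma RInt_scalR (f : R -> R) a b c : ex_RInt f a b ->
  RInt (fun x => c * f x) a b = c * RInt f a b.
Proof. intros. apply (RInt_scal f a b c); auto. Qed.

Lemma contR_mult (f g : R -> R) x : continuous f x -> continuous g x -> continuous (fun y => f y * g y) x.
Proof. intros. apply (continuous_mult f g x); auto. Qed.

Definition spd (X Y : R -> R) u := sqrt (Derive X u ^ 2 + Derive Y u ^ 2).
Definition dsf (X Y : R -> R) (g : R -> R) u := Derive g u / spd X Y u.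
Definition kf (X Y : R -> R) u :=
  - (dsf X Y (dsf X Y X) u * (- dsf X Y Y u) + dsf X Y (dsf X Y Y) u * dsf X Y X u).

Lemma speed_eq x y u t : speed x y u t = spd (fun u => x u t) (fun u => y u t) u.
Proof. reflexivity. Qed.
Lemma curv_eq x y u t : curv x y u t = kf (fun u => x u t) (fun u => y u t) u.
Proof. reflexivity. Qed.
Lemma curv_s_eq x y u t : curv_s x y u t = dsf (fun u => x u t) (fun u => y u t) (kf (fun u => x u t) (fun u => y u t)) u.
Proof. reflexivity. Qed.
Lemma curv_ss_eq x y u t : curv_ss x y u t = dsf (fun u => x u t) (fun u => y u t)
   (dsf (fun u => x u t) (fun u => y u t) (kf (fun u => x u t) (fun u => y u t))) u.
Proof. reflexivity. Qed.

Section Slice.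
Variables (X Y : R -> R) (lo hi : R).
Hypothesis HX : Cinf lo hi X.
Hypothesis HY : Cinf lo hi Y.
Hypothesis Hs : forall u, lo < u < hi -> 0 < spd X Y u.

Lemma spd_Cinf : Cinf lo hi (spd X Y).
Proof.
  unfold spd. apply Cinf_sqrt.
  apply Cinf_plus; apply Cinf_pow; apply Cinf_Derive; auto.
  intros u Hu. specialize (Hs u Hu). unfold spd in Hs.
  destruct (Rle_or_lt (Derive X u ^ 2 + Derive Y u ^ 2) 0) as [H|H]; auto.
  rewrite sqrt_neg_0 in Hs; auto; lra.
Qed.

Lemma dsf_Cinf g : Cinf lo hi g -> Cinf lo hi (dsf X Y g).
Proof.
  intros G. unfold dsf. apply Cinf_div. apply Cinf_Derive; auto. apply spd_Cinf.
  intros u Hu; specialize (Hs u Hu); lra.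
Qed.

Lemma kf_Cinf : Cinf lo hi (kf X Y).
Proof.
  unfold kf. apply Cinf_opp. apply Cinf_plus; apply Cinf_mult;
  repeat (apply dsf_Cinf); auto; apply Cinf_opp; apply dsf_Cinf; auto.
Qed.

Lemma kf_formula u : lo < u < hi ->
  kf X Y u = (Derive (Derive X) u * Derive Y u - Derive X u * Derive (Derive Y) u) / spd X Y u ^ 3.
Proof.
  intros Hu. assert (Hsu := Hs u Hu).
  assert (SX := Cinf_isd _ _ _ u (Cinf_Derive _ _ _ HX) Hu).
  assert (SY := Cinf_isd _ _ _ u (Cinf_Derive _ _ _ HY) Hu).
  assert (SS := Cinf_isd _ _ _ u spd_Cinf Hu).
  assert (E1 := is_derive_div _ _ _ _ _ SX SS (Rgt_not_eq _ _ Hsu)).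
  assert (E2 := is_derive_div _ _ _ _ _ SY SS (Rgt_not_eq _ _ Hsu)).
  assert (D1 : Derive (dsf X Y X) u = (Derive (Derive X) u * spd X Y u - Derive X u * Derive (spd X Y) u) / spd X Y u ^ 2).
  { apply is_derive_unique; exact E1. }
  assert (D2 : Derive (dsf X Y Y) u = (Derive (Derive Y) u * spd X Y u - Derive Y u * Derive (spd X Y) u) / spd X Y u ^ 2).
  { apply is_derive_unique; exact E2. }
  assert (K1 : dsf X Y (dsf X Y X) u = Derive (dsf X Y X) u / spd X Y u) by reflexivity.
  assert (K2 : dsf X Y (dsf X Y Y) u = Derive (dsf X Y Y) u / spd X Y u) by reflexivity.
  unfold kf. rewrite K1, K2, D1, D2. unfold dsf. field. lra.
Qed.

End Slice.

Lemma contR_plus (f g : R -> R) x : continuous f x -> continuous g x -> continuous (fun y => f y + g y) x.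
Proof. intros. apply (continuous_plus f g x); auto. Qed.
Lemma contR_opp (f : R -> R) x : continuous f x -> continuous (fun y => - f y) x.
Proof. intros. apply (continuous_opp f x); auto. Qed.
Lemma contR_minus (f g : R -> R) x : continuous f x -> continuous g x -> continuous (fun y => f y - g y) x.
Proof. intros. apply contR_plus; auto. apply contR_opp; auto. Qed.
Lemma contR_const (c : R) (x : R) : continuous (fun _ : R => c) x.
Proof. apply (continuous_const c x). Qed.
Lemma contR_pow (f : R -> R) n x : continuous f x -> continuous (fun y => f y ^ n) x.
Proof. intros H; induction n; simpl. apply contR_const. apply contR_mult; auto. Qed.

Lemma RInt_ChaslesR (f : R -> R) a b c : ex_RInt f a b -> ex_RInt f b c -> RInt f a b + RInt f b c = RInt f a c.
Proof. intros. apply (RInt_Chasles f a b c); auto. Qed.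
Lemma RInt_pointR (f : R -> R) a : RInt f a a = 0.
Proof. apply (RInt_point a f). Qed.
Lemma FTC_R (f df : R -> R) a b :
  (forall x, Rmin a b <= x <= Rmax a b -> is_derive f x (df x)) ->
  (forall x, Rmin a b <= x <= Rmax a b -> continuous df x) ->
  RInt df a b = f b - f a.
Proof. intros H1 H2. apply is_RInt_unique. apply (is_RInt_derive f df a b); auto. Qed.
Lemma RInt_extR (f g : R -> R) a b : (forall x, Rmin a b < x < Rmax a b -> f x = g x) -> RInt f a b = RInt g a b.
Proof. apply RInt_ext. Qed.

Lemma in_mm lo hi a b z : lo < -1 -> 1 < hi -> -1 <= a <= 1 -> -1 <= b <= 1 ->
  Rmin a b <= z <= Rmax a b -> lo < z < hi.
Proof.
  intros H1 H2 Ha Hb [Hz1 Hz2].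
  assert (-1 <= Rmin a b) by (apply Rmin_glb; lra).
  assert (Rmax a b <= 1) by (apply Rmax_lub; lra). lra.
Qed.

Lemma quad_cs F H G : 0 <= G -> (forall c, 0 <= F - 2 * c * H + c ^ 2 * G) -> H ^ 2 <= F * G.
Proof.
  intros HG Hc. destruct (Rle_lt_or_eq_dec 0 G HG) as [Gp|G0].
  - specialize (Hc (H / G)).
    assert (E : F - 2 * (H / G) * H + (H / G) ^ 2 * G = (F * G - H ^ 2) / G) by (field; lra).
    rewrite E in Hc.
    assert (0 <= (F * G - H ^ 2) / G * G) by (apply Rmult_le_pos; lra).
    replace ((F * G - H ^ 2) / G * G) with (F * G - H ^ 2) in H0 by (field; lra). lra.
  - subst G. destruct (Req_dec H 0) as [H0|Hn].
    + subst H. assert (X := Hc 0). nra.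
    + specialize (Hc ((F + 1) / (2 * H))).
      replace (F - 2 * ((F + 1) / (2 * H)) * H + ((F + 1) / (2 * H)) ^ 2 * 0) with (-1) in Hc by (field; auto).
      lra.
Qed.

Lemma cs2 x1 x2 A1 A2 B1 B2 : 0 <= A1 -> 0 <= A2 -> 0 <= B1 -> 0 <= B2 ->
  x1 ^ 2 <= A1 * B1 -> x2 ^ 2 <= A2 * B2 -> (x1 + x2) ^ 2 <= (A1 + A2) * (B1 + B2).
Proof.
  intros HA1 HA2 HB1 HB2 H1 H2. set (p := A1 * B2 + A2 * B1). set (q := x1 * x2).
  assert (Hp : 0 <= p) by (unfold p; apply Rplus_le_le_0_compat; apply Rmult_le_pos; auto).
  assert (Hq : q ^ 2 <= (A1 * B1) * (A2 * B2)).
  { unfold q. replace ((x1 * x2) ^ 2) with (x1 ^ 2 * x2 ^ 2) by ring.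
    apply Rmult_le_compat; auto; apply pow2_ge_0. }
  assert (Hpq : 4 * q ^ 2 <= p ^ 2).
  { assert (p ^ 2 - 4 * ((A1 * B1) * (A2 * B2)) = (A1 * B2 - A2 * B1) ^ 2) by (unfold p; ring).
    assert (0 <= (A1 * B2 - A2 * B1) ^ 2) by apply pow2_ge_0. lra. }
  assert (2 * q <= p).
  { destruct (Rle_or_lt (2 * q) p) as [h|h]; auto.
    assert (p * p < (2 * q) * (2 * q)) by (apply Rmult_le_0_lt_compat; lra). lra. }
  replace ((x1 + x2) ^ 2) with (x1 ^ 2 + x2 ^ 2 + 2 * q) by (unfold q; ring).
  replace ((A1 + A2) * (B1 + B2)) with (A1 * B1 + A2 * B2 + p) by (unfold p; ring).
  lra.
Qed.

Lemma RInt_lin3 (f1 f2 f3 : R -> R) a b c1 c2 c3 :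
  ex_RInt f1 a b -> ex_RInt f2 a b -> ex_RInt f3 a b ->
  RInt (fun x => c1 * f1 x + c2 * f2 x + c3 * f3 x) a b = c1 * RInt f1 a b + c2 * RInt f2 a b + c3 * RInt f3 a b.
Proof.
  intros E1 E2 E3.
  assert (E1' : ex_RInt (fun x => c1 * f1 x) a b) by (apply (ex_RInt_scal f1 a b c1); auto).
  assert (E2' : ex_RInt (fun x => c2 * f2 x) a b) by (apply (ex_RInt_scal f2 a b c2); auto).
  assert (E3' : ex_RInt (fun x => c3 * f3 x) a b) by (apply (ex_RInt_scal f3 a b c3); auto).
  rewrite RInt_plusR; auto. rewrite RInt_plusR; auto.
  rewrite !RInt_scalR; auto.
  apply (ex_RInt_plus (fun x => c1 * f1 x) (fun x => c2 * f2 x)); auto.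
Qed.

Lemma wcs (f g w : R -> R) a b : a <= b ->
  (forall z, a <= z <= b -> continuous f z) ->
  (forall z, a <= z <= b -> continuous g z) ->
  (forall z, a <= z <= b -> continuous w z) ->
  (forall z, a < z < b -> 0 <= w z) ->
  (RInt (fun z => f z * g z * w z) a b) ^ 2 <=
    RInt (fun z => f z ^ 2 * w z) a b * RInt (fun z => g z ^ 2 * w z) a b.
Proof.
  intros Hab Cf Cg Cw Hw.
  assert (MM : forall z, Rmin a b <= z <= Rmax a b -> a <= z <= b).
  { intros z. rewrite Rmin_left, Rmax_right; auto. }
  assert (E1 : ex_RInt (fun z => f z ^ 2 * w z) a b).
  { apply exR; intros z Hz; apply MM in Hz. apply contR_mult; auto. apply contR_pow; auto. }
  assert (E2 : ex_RInt (fun z => f z * g z * w z) a b).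
  { apply exR; intros z Hz; apply MM in Hz. repeat apply contR_mult; auto. }
  assert (E3 : ex_RInt (fun z => g z ^ 2 * w z) a b).
  { apply exR; intros z Hz; apply MM in Hz. apply contR_mult; auto. apply contR_pow; auto. }
  apply quad_cs.
  - apply RInt_ge_0; auto. intros z Hz. apply Rmult_le_pos; auto. apply pow2_ge_0.
  - intros c.
    replace (RInt (fun z : R => f z ^ 2 * w z) a b - 2 * c * RInt (fun z : R => f z * g z * w z) a b +
       c ^ 2 * RInt (fun z : R => g z ^ 2 * w z) a b) with
      (1 * RInt (fun z : R => f z ^ 2 * w z) a b +
      (-(2 * c)) * RInt (fun z : R => f z * g z * w z) a b +
      c ^ 2 * RInt (fun z : R => g z ^ 2 * w z) a b) by ring.
    rewrite <- (RInt_lin3 _ _ _ a b 1 (-(2 * c)) (c ^ 2)); auto.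
    apply RInt_ge_0; auto.
    + apply exR; intros z Hz; apply MM in Hz.
      apply contR_plus. apply contR_plus.
      apply contR_mult. apply contR_const. apply contR_mult; auto. apply contR_pow; auto.
      apply contR_mult. apply contR_const. repeat apply contR_mult; auto.
      apply contR_mult. apply contR_const. apply contR_mult; auto. apply contR_pow; auto.
    + intros z Hz. specialize (Hw z Hz).
      replace (1 * (f z ^ 2 * w z) + (-(2 * c)) * (f z * g z * w z) + c ^ 2 * (g z ^ 2 * w z))
        with ((f z - c * g z) ^ 2 * w z) by ring.
      apply Rmult_le_pos; auto. apply pow2_ge_0.
Qed.

Ltac req := cbv beta; try match goal with |- @eq _ ?a ?b => change (@eq R a b) end.

Lemma isd_mult (f g : R -> R) x df dg : is_derive f x df -> is_derive g x dg ->
  is_derive (fun t => f t * g t) x (df * g x + f x * dg).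
Proof. intros. apply (is_derive_mult f g x df dg); auto. intros; apply Rmult_comm. Qed.
Lemma isd_plus (f g : R -> R) x df dg : is_derive f x df -> is_derive g x dg ->
  is_derive (fun t => f t + g t) x (df + dg).
Proof. intros. apply (is_derive_plus f g x df dg); auto. Qed.
Lemma isd_minus (f g : R -> R) x df dg : is_derive f x df -> is_derive g x dg ->
  is_derive (fun t => f t - g t) x (df - dg).
Proof. intros. apply (is_derive_minus f g x df dg); auto. Qed.
Lemma isd_const (c : R) (x : R) : is_derive (fun _ : R => c) x 0.
Proof. apply (is_derive_const c x). Qed.
Lemma isd_eq (f : R -> R) x d d' : is_derive f x d -> d = d' -> is_derive f x d'.
Proof. intros H E; subst; auto. Qed.

Lemma in_mm2 lo hi a b z : lo < a < hi -> lo < b < hi -> Rmin a b <= z <= Rmax a b -> lo < z < hi.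
Proof.
  intros Ha Hb [H1 H2].
  assert (lo < Rmin a b) by (apply Rmin_glb_lt; lra).
  assert (Rmax a b < hi) by (apply Rmax_lub_lt; lra). lra.
Qed.

Section Bound.
Variables (k ks s : R -> R) (lo hi : R).
Hypothesis Hlo : lo < -1.
Hypothesis Hhi : 1 < hi.
Hypothesis Cks : forall v, lo < v < hi -> continuous ks v.
Hypothesis Cs : forall v, lo < v < hi -> continuous s v.
Hypothesis Dk : forall v, lo < v < hi -> is_derive k v (ks v * s v).
Hypothesis Sp : forall v, lo < v < hi -> 0 < s v.

Let Ck v : lo < v < hi -> continuous k v.
Proof. intros H. apply (@ex_derive_continuous R_AbsRing R_NormedModule). eexists; apply Dk; auto. Qed.

Definition Sf v := RInt s (-1) v.

Lemma exs a b : lo < a < hi -> lo < b < hi -> ex_RInt s a b.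
Proof. intros Ha Hb. apply exR. intros z Hz. apply Cs. apply (in_mm2 lo hi a b z Ha Hb Hz). Qed.

Lemma Sf_deriv v : lo < v < hi -> is_derive Sf v (s v).
Proof.
  intros Hv. apply (is_derive_RInt s Sf (-1) v).
  - apply (filter_imp (fun b => lo < b < hi)). intros b Hb. apply (@RInt_correct R_CompleteNormedModule s (-1) b). apply exs; auto; lra.
    apply locI; auto.
  - apply Cs; auto.
Qed.

Lemma Sf_cont v : lo < v < hi -> continuous Sf v.
Proof. intros H. apply (@ex_derive_continuous R_AbsRing R_NormedModule). eexists; apply Sf_deriv; auto. Qed.

Lemma pointwise_bound u : -1 <= u <= 1 ->
  let L := RInt s (-1) 1 in
  let th := RInt (fun v => k v * s v) (-1) 1 in
  let Sks := RInt (fun v => ks v ^ 2 * s v) (-1) 1 in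
  (L * k u - th) ^ 2 <= Sks * L ^ 3 / 3.
Proof.
  intros Hu L th Sks.
  assert (I1 : forall z, -1 <= z <= 1 -> lo < z < hi) by (intros; lra).
  assert (MM : forall a b z, -1 <= a <= 1 -> -1 <= b <= 1 -> Rmin a b <= z <= Rmax a b -> lo < z < hi).
  { intros a b z Ha Hb Hz. apply (in_mm lo hi a b z Hlo Hhi Ha Hb Hz). }
  assert (Hm1 : -1 <= -1 <= 1) by lra. assert (H1 : -1 <= 1 <= 1) by lra.
  assert (CC : forall (f : R -> R) a b, -1 <= a <= 1 -> -1 <= b <= 1 -> (forall z, lo < z < hi -> continuous f z) -> ex_RInt f a b).
  { intros f a b Ha Hb Hf. apply exR. intros z Hz. apply Hf. apply (MM a b z Ha Hb Hz). }
  assert (F1 : RInt (fun v => ks v * Sf v * s v + k v * s v) (-1) u = k u * Sf u).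
  { assert (D : forall z, Rmin (-1) u <= z <= Rmax (-1) u ->
       is_derive (fun v => k v * Sf v) z (ks z * Sf z * s z + k z * s z)).
    { intros z Hz. assert (Hz' := MM _ _ _ Hm1 Hu Hz).
      eapply isd_eq. apply isd_mult. apply Dk; exact Hz'. apply Sf_deriv; exact Hz'. req; ring. }
    assert (C : forall z, Rmin (-1) u <= z <= Rmax (-1) u ->
       continuous (fun v => ks v * Sf v * s v + k v * s v) z).
    { intros z Hz. assert (Hz' := MM _ _ _ Hm1 Hu Hz).
      apply contR_plus; repeat apply contR_mult; auto. apply Sf_cont; auto. }
    rewrite (FTC_R _ _ (-1) u D C).
    replace (Sf (-1)) with 0 by (unfold Sf; symmetry; apply RInt_pointR). req; ring. }
  assert (F2 : RInt (fun v => ks v * (Sf v - L) * s v + k v * s v) u 1 = - (k u * (Sf u - L))).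
  { assert (D : forall z, Rmin u 1 <= z <= Rmax u 1 ->
       is_derive (fun v => k v * (Sf v - L)) z (ks z * (Sf z - L) * s z + k z * s z)).
    { intros z Hz. assert (Hz' := MM _ _ _ Hu H1 Hz).
      eapply isd_eq. apply isd_mult. apply Dk; exact Hz'. apply isd_minus. apply Sf_deriv; exact Hz'.
      apply isd_const. req; ring. }
    assert (C : forall z, Rmin u 1 <= z <= Rmax u 1 ->
       continuous (fun v => ks v * (Sf v - L) * s v + k v * s v) z).
    { intros z Hz. assert (Hz' := MM _ _ _ Hu H1 Hz).
      apply contR_plus; repeat apply contR_mult; auto. apply contR_minus. apply Sf_cont; auto. apply contR_const. }
    rewrite (FTC_R _ _ u 1 D C).
    replace (Sf 1) with L by reflexivity. req; ring. }
  assert (EA : ex_RInt (fun v => ks v * Sf v * s v) (-1) u).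
  { apply CC; auto. intros z Hz. repeat apply contR_mult; auto. apply Sf_cont; auto. }
  assert (EB : ex_RInt (fun v => ks v * (Sf v - L) * s v) u 1).
  { apply CC; auto. intros z Hz. repeat apply contR_mult; auto. apply contR_minus. apply Sf_cont; auto. apply contR_const. }
  assert (Eks1 : ex_RInt (fun v => k v * s v) (-1) u) by (apply CC; auto; intros; apply contR_mult; auto).
  assert (Eks2 : ex_RInt (fun v => k v * s v) u 1) by (apply CC; auto; intros; apply contR_mult; auto).
  rewrite RInt_plusR in F1, F2; auto.
  assert (Eth : RInt (fun v => k v * s v) (-1) u + RInt (fun v => k v * s v) u 1 = th).
  { apply RInt_ChaslesR; auto. }
  set (A := RInt (fun v => ks v * Sf v * s v) (-1) u) in *.
  set (B := RInt (fun v => ks v * (Sf v - L) * s v) u 1) in *.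
  assert (AB : L * k u - th = A + B) by lra.
  assert (CA : A ^ 2 <= RInt (fun z => ks z ^ 2 * s z) (-1) u * RInt (fun z => Sf z ^ 2 * s z) (-1) u).
  { apply wcs; try lra; intros; [apply Cks|apply Sf_cont|apply Cs|apply Rlt_le, Sp]; lra. }
  assert (CB : B ^ 2 <= RInt (fun z => ks z ^ 2 * s z) u 1 * RInt (fun z => (Sf z - L) ^ 2 * s z) u 1).
  { apply wcs; try lra; intros; [apply Cks|apply contR_minus; [apply Sf_cont|apply contR_const]|apply Cs|apply Rlt_le, Sp]; lra. }
  assert (G1 : RInt (fun z => Sf z ^ 2 * s z) (-1) u = Sf u ^ 3 / 3).
  { assert (D : forall z, Rmin (-1) u <= z <= Rmax (-1) u ->
       is_derive (fun v => / 3 * Sf v ^ 3) z (Sf z ^ 2 * s z)).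
    { intros z Hz. assert (Hz' := MM _ _ _ Hm1 Hu Hz).
      eapply isd_eq. apply is_derive_scal. apply is_derive_pow. apply Sf_deriv; exact Hz'. simpl. req; field. }
    assert (C : forall z, Rmin (-1) u <= z <= Rmax (-1) u -> continuous (fun v => Sf v ^ 2 * s v) z).
    { intros z Hz. assert (Hz' := MM _ _ _ Hm1 Hu Hz).
      apply contR_mult; auto. apply contR_pow. apply Sf_cont; auto. }
    rewrite (FTC_R _ _ (-1) u D C).
    replace (Sf (-1)) with 0 by (unfold Sf; symmetry; apply RInt_pointR). req; field. }
  assert (G2 : RInt (fun z => (Sf z - L) ^ 2 * s z) u 1 = (L - Sf u) ^ 3 / 3).
  { assert (D : forall z, Rmin u 1 <= z <= Rmax u 1 ->
       is_derive (fun v => / 3 * (Sf v - L) ^ 3) z ((Sf z - L) ^ 2 * s z)).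
    { intros z Hz. assert (Hz' := MM _ _ _ Hu H1 Hz).
      eapply isd_eq. apply is_derive_scal. apply is_derive_pow. apply isd_minus.
      apply Sf_deriv; exact Hz'. apply isd_const. simpl. req; field. }
    assert (C : forall z, Rmin u 1 <= z <= Rmax u 1 -> continuous (fun v => (Sf v - L) ^ 2 * s v) z).
    { intros z Hz. assert (Hz' := MM _ _ _ Hu H1 Hz).
      apply contR_mult; auto. apply contR_pow. apply contR_minus. apply Sf_cont; auto. apply contR_const. }
    rewrite (FTC_R _ _ u 1 D C).
    replace (Sf 1) with L by reflexivity. req; field. }
  rewrite G1 in CA. rewrite G2 in CB.
  assert (Eq1 : ex_RInt (fun z => ks z ^ 2 * s z) (-1) u) by (apply CC; auto; intros; apply contR_mult; auto; apply contR_pow; auto).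
  assert (Eq2 : ex_RInt (fun z => ks z ^ 2 * s z) u 1) by (apply CC; auto; intros; apply contR_mult; auto; apply contR_pow; auto).
  assert (ES : RInt (fun z => ks z ^ 2 * s z) (-1) u + RInt (fun z => ks z ^ 2 * s z) u 1 = Sks).
  { apply RInt_ChaslesR; auto. }
  assert (P1 : 0 <= RInt (fun z => ks z ^ 2 * s z) (-1) u).
  { apply RInt_ge_0; try lra; auto. intros z Hz. apply Rmult_le_pos. apply pow2_ge_0. apply Rlt_le, Sp; lra. }
  assert (P2 : 0 <= RInt (fun z => ks z ^ 2 * s z) u 1).
  { apply RInt_ge_0; try lra; auto. intros z Hz. apply Rmult_le_pos. apply pow2_ge_0. apply Rlt_le, Sp; lra. }
  assert (S0 : 0 <= Sf u).
  { unfold Sf. apply RInt_ge_0; try lra. apply exs; lra. intros z Hz. apply Rlt_le, Sp; lra. }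
  assert (SL : Sf u <= L).
  { assert (0 <= RInt s u 1).
    { apply RInt_ge_0; try lra. apply exs; lra. intros z Hz. apply Rlt_le, Sp; lra. }
    assert (Sf u + RInt s u 1 = L) by (apply RInt_ChaslesR; apply exs; lra). lra. }
  rewrite AB.
  assert (Q : (A + B) ^ 2 <= (RInt (fun z => ks z ^ 2 * s z) (-1) u + RInt (fun z => ks z ^ 2 * s z) u 1)
                 * (Sf u ^ 3 / 3 + (L - Sf u) ^ 3 / 3)).
  { apply cs2; auto.
    - apply Rmult_le_pos; [apply pow_le; auto | lra].
    - apply Rmult_le_pos; [apply pow_le; lra | lra]. }
  rewrite ES in Q.
  assert (Sks0 : 0 <= Sks) by lra.
  assert (Hc : Sf u ^ 3 / 3 + (L - Sf u) ^ 3 / 3 <= L ^ 3 / 3).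
  { assert (L ^ 3 - Sf u ^ 3 - (L - Sf u) ^ 3 = 3 * Sf u * L * (L - Sf u)) by (req; ring).
    assert (0 <= Sf u * L * (L - Sf u)) by (apply Rmult_le_pos; [apply Rmult_le_pos|]; lra).
    lra. }
  assert (Sks * (Sf u ^ 3 / 3 + (L - Sf u) ^ 3 / 3) <= Sks * (L ^ 3 / 3)) by (apply Rmult_le_compat_l; auto).
  lra.
Qed.

End Bound.

Lemma c2d_line1 (f : R -> R -> R) x y : continuity_2d_pt f x y -> continuous (fun v => f x v) y.
Proof.
  intros H. apply continuity_2d_pt_filterlim in H. intros P HP.
  destruct (H P HP) as [d Hd]. exists d. intros v Hv. apply (Hd (x, v)). split; [apply ball_center | exact Hv].
Qed.

Lemma c2d_line0 (f : R -> R -> R) x y : continuity_2d_pt f x y -> continuous (fun v => f v y) x.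
Proof.
  intros H. apply continuity_2d_pt_filterlim in H. intros P HP.
  destruct (H P HP) as [d Hd]. exists d. intros v Hv. apply (Hd (v, y)). split; [exact Hv | apply ball_center].
Qed.

Lemma locally_2d_rect a b c d t u : c < t < d -> a < u < b ->
  locally_2d (fun t' u' => c < t' < d /\ a < u' < b) t u.
Proof.
  intros Ht Hu.
  assert (Hp : 0 < Rmin (Rmin (t - c) (d - t)) (Rmin (u - a) (b - u))).
  { repeat apply Rmin_glb_lt; lra. }
  exists (mkposreal _ Hp). simpl. intros t' u' H1 H2.
  assert (Rmin (Rmin (t - c) (d - t)) (Rmin (u - a) (b - u)) <= Rmin (t - c) (d - t)) by apply Rmin_l.
  assert (Rmin (Rmin (t - c) (d - t)) (Rmin (u - a) (b - u)) <= Rmin (u - a) (b - u)) by apply Rmin_r.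
  assert (Rmin (t - c) (d - t) <= t - c) by apply Rmin_l.
  assert (Rmin (t - c) (d - t) <= d - t) by apply Rmin_r.
  assert (Rmin (u - a) (b - u) <= u - a) by apply Rmin_l.
  assert (Rmin (u - a) (b - u) <= b - u) by apply Rmin_r.
  apply Rabs_def2 in H1. apply Rabs_def2 in H2. lra.
Qed.

Section Generic.
Variables (f : R -> R -> R) (lo hi c d : R).
Hypothesis Sm : smooth_on_rect f lo hi c d.

Lemma sm_exu n u t : lo < u < hi -> c < t < d -> ex_derive_n (fun u' => f u' t) n u.
Proof. intros Hu Ht. exact (proj1 (Sm n 0%nat u t Hu Ht)). Qed.
Lemma sm_ext n m u t : lo < u < hi -> c < t < d ->
  ex_derive_n (fun t' => Derive_n (fun u' => f u' t') n u) m t.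
Proof. intros Hu Ht. exact (proj1 (proj2 (Sm n m u t Hu Ht))). Qed.
Lemma sm_cont n m u t : lo < u < hi -> c < t < d ->
  continuous (fun p : R * R => pd n m f (fst p) (snd p)) (u, t).
Proof. intros Hu Ht. exact (proj2 (proj2 (Sm n m u t Hu Ht))). Qed.

Lemma sm_Cinf t : c < t < d -> Cinf lo hi (fun u => f u t).
Proof. intros Ht. apply Cinf_of_exn. intros m u Hu. apply sm_exu; auto. Qed.

Lemma sm_isd_t u t : lo < u < hi -> c < t < d -> is_derive (fun t' => f u t') t (pd 0 1 f u t).
Proof. intros Hu Ht. apply Derive_correct. exact (sm_ext 0%nat 1%nat u t Hu Ht). Qed.

Lemma sm_isd_t1 u t : lo < u < hi -> c < t < d -> is_derive (fun t' => pd 1 0 f u t') t (pd 1 1 f u t).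
Proof. intros Hu Ht. apply Derive_correct. exact (sm_ext 1%nat 1%nat u t Hu Ht). Qed.

Lemma sm_c2d n m u t : lo < u < hi -> c < t < d -> continuity_2d_pt (fun t' u' => pd n m f u' t') t u.
Proof. intros Hu Ht. apply (cont_to_2d (pd n m f)). apply sm_cont; auto. Qed.

Lemma sm_cu n m u t : lo < u < hi -> c < t < d -> continuous (fun u' => pd n m f u' t) u.
Proof. intros Hu Ht. apply (cont_to_1d (pd n m f)). apply sm_cont; auto. Qed.

(* Schwarz substitute *)
Lemma sm_schwarz u t : lo < u < hi -> c < t < d ->
  is_derive (fun u' => pd 0 1 f u' t) u (pd 1 1 f u t).
Proof.
  intros Hu Ht.
  assert (KEY : forall u', lo < u' < hi ->
     pd 0 1 f u' t = pd 0 1 f u t + RInt (fun v => pd 1 1 f v t) u u').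
  { intros u' Hu'.
    assert (MM : forall t', c < t' < d -> forall z, Rmin u u' <= z <= Rmax u u' -> lo < z < hi).
    { intros t' _ z Hz. apply (in_mm2 lo hi u u' z Hu Hu' Hz). }
    assert (h1 : is_derive (fun t' => f u' t' - f u t') t (pd 0 1 f u' t - pd 0 1 f u t)).
    { apply isd_minus; apply sm_isd_t; auto. }
    assert (h3 : is_derive (fun t' => RInt (fun v => pd 1 0 f v t') u u') t
                   (RInt (fun v => Derive (fun z => pd 1 0 f v z) t) u u')).
    { apply (is_derive_RInt_param (fun t' v => pd 1 0 f v t') u u' t).
      - apply (filter_imp (fun t' => c < t' < d)). 2: apply locI; auto.
        intros t' Ht' v Hv. exact (sm_ext 1%nat 1%nat v t' (MM t' Ht' v Hv) Ht').
      - intros v Hv. apply (sm_c2d 1%nat 1%nat v t (MM t Ht v Hv) Ht).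
      - apply (filter_imp (fun t' => c < t' < d)). 2: apply locI; auto.
        intros t' Ht'. apply exR. intros z Hz. apply sm_cu; auto. apply (MM t' Ht' z Hz). }
    assert (h2 : locally t (fun t' => RInt (fun v => pd 1 0 f v t') u u' = f u' t' - f u t')).
    { apply (filter_imp (fun t' => c < t' < d)). 2: apply locI; auto.
      intros t' Ht'. apply (FTC_R (fun v => f v t')).
      - intros z Hz. apply Derive_correct. exact (sm_exu 1%nat z t' (MM t' Ht' z Hz) Ht').
      - intros z Hz. apply (sm_cu 1%nat 0%nat z t' (MM t' Ht' z Hz) Ht'). }
    assert (h4 := is_derive_ext_loc _ _ _ _ h2 h3).
    assert (E1 := is_derive_unique _ _ _ h1). assert (E2 := is_derive_unique _ _ _ h4).
    assert (E : RInt (fun v => pd 1 1 f v t) u u' = pd 0 1 f u' t - pd 0 1 f u t).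
    { etransitivity; [symmetry; exact E2 | exact E1]. }
    rewrite E. req; ring. }
  apply is_derive_ext_loc with (fun u' => pd 0 1 f u t + RInt (fun v => pd 1 1 f v t) u u').
  - apply (filter_imp (fun u' => lo < u' < hi)). 2: apply locI; auto.
    intros u' Hu'. symmetry; apply KEY; auto.
  - eapply isd_eq. apply isd_plus. apply isd_const.
    apply (is_derive_RInt (fun v => pd 1 1 f v t) (fun b => RInt (fun v => pd 1 1 f v t) u b) u u).
    + apply (filter_imp (fun b => lo < b < hi)). 2: apply locI; auto.
      intros b Hb. apply (@RInt_correct R_CompleteNormedModule). apply exR. intros z Hz.
      apply sm_cu; auto. apply (in_mm2 lo hi u b z Hu Hb Hz).
    + apply sm_cu; auto.
    + req; ring.
Qed.

End Generic.

Section Flow.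
Variables (x y : R -> R -> R) (T eps0 : R).
Hypothesis He : 0 < eps0.
Hypothesis HT : 0 < T.
Hypothesis SX : smooth_on_rect x (-1 - eps0) (1 + eps0) (- eps0) T.
Hypothesis SY : smooth_on_rect y (-1 - eps0) (1 + eps0) (- eps0) T.
Hypothesis Hpos : forall u t, -1 <= u <= 1 -> 0 <= t < T -> 0 < speed x y u t.

Definition inR u t := -1 - eps0 < u < 1 + eps0 /\ - eps0 < t < T.

Lemma speed_c2d u t : -1 - eps0 < u < 1 + eps0 -> - eps0 < t < T ->
  continuity_2d_pt (fun t' u' => speed x y u' t') t u.
Proof.
  intros Hu Ht.
  assert (C1 := sm_c2d x _ _ _ _ SX 1 0 u t Hu Ht).
  assert (C2 := sm_c2d y _ _ _ _ SY 1 0 u t Hu Ht).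
  assert (C3 := continuity_2d_pt_plus _ _ _ _ (continuity_2d_pt_mult _ _ _ _ C1 C1) (continuity_2d_pt_mult _ _ _ _ C2 C2)).
  assert (C4 := continuity_1d_2d_pt_comp sqrt _ t u (continuity_pt_sqrt _ (Rplus_le_le_0_compat _ _ (Rle_0_sqr _) (Rle_0_sqr _))) C3).
  apply continuity_2d_pt_ext with (2 := C4). intros t' u'. unfold speed. f_equal. simpl. ring.
Qed.

Lemma speed_cu u t : -1 - eps0 < u < 1 + eps0 -> - eps0 < t < T -> continuous (fun u' => speed x y u' t) u.
Proof. intros Hu Ht. apply (c2d_line1 (fun t' u' => speed x y u' t')). apply speed_c2d; auto. Qed.

Lemma speed_ct u t : -1 - eps0 < u < 1 + eps0 -> - eps0 < t < T -> continuous (fun t' => speed x y u t') t.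
Proof. intros Hu Ht. apply (c2d_line0 (fun t' u' => speed x y u' t')). apply speed_c2d; auto. Qed.

Definition dspeed u t := (pd 1 0 x u t * pd 1 1 x u t + pd 1 0 y u t * pd 1 1 y u t) / speed x y u t.

Lemma speed_tderiv u t : -1 - eps0 < u < 1 + eps0 -> - eps0 < t < T -> 0 < speed x y u t ->
  is_derive (fun z => speed x y u z) t (dspeed u t).
Proof.
  intros Hu Ht Hs.
  assert (D1 := sm_isd_t1 x _ _ _ _ SX u t Hu Ht).
  assert (D2 := sm_isd_t1 y _ _ _ _ SY u t Hu Ht).
  assert (Q := isd_plus _ _ _ _ _ (is_derive_pow _ 2 _ _ D1) (is_derive_pow _ 2 _ _ D2)).
  assert (Hq : 0 < pd 1 0 x u t ^ 2 + pd 1 0 y u t ^ 2).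
  { unfold speed in Hs. destruct (Rle_or_lt (pd 1 0 x u t ^ 2 + pd 1 0 y u t ^ 2) 0) as [h|h]; auto.
    rewrite sqrt_neg_0 in Hs; auto; lra. }
  assert (S := is_derive_sqrt _ _ _ Q Hq).
  eapply isd_eq. exact S. unfold dspeed, speed. simpl. req. field.
  apply Rgt_not_eq. apply sqrt_lt_R0. simpl in Hq. lra.
Qed.

Lemma dspeed_c2d u t : -1 - eps0 < u < 1 + eps0 -> - eps0 < t < T -> 0 < speed x y u t ->
  continuity_2d_pt (fun t' u' => dspeed u' t') t u.
Proof.
  intros Hu Ht Hs. unfold dspeed.
  apply continuity_2d_pt_mult.
  - apply continuity_2d_pt_plus; apply continuity_2d_pt_mult;
    [apply (sm_c2d x _ _ _ _ SX) | apply (sm_c2d x _ _ _ _ SX) | apply (sm_c2d y _ _ _ _ SY) | apply (sm_c2d y _ _ _ _ SY)]; auto.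
  - apply continuity_2d_pt_inv. apply speed_c2d; auto. cbv beta. apply Rgt_not_eq; exact Hs.
Qed.

Lemma tube : exists del, 0 < del /\ del <= eps0 /\
  forall u t, -1 <= u <= 1 -> - del < t < T -> 0 < speed x y u t.
Proof.
  assert (Cu : forall u, -1 <= u <= 1 -> continuity_2d_pt (fun t' u' => speed x y u' t') 0 u).
  { intros u Hu. apply speed_c2d; lra. }
  assert (Cm : forall c, -1 <= c <= 1 -> continuity_pt (fun u => speed x y u 0) c).
  { intros c0 Hc. apply continuity_pt_filterlim. apply speed_cu; lra. }
  destruct (continuity_ab_min _ (-1) 1 ltac:(lra) Cm) as [mx [Hmx Hmx']].
  set (m := speed x y mx 0).
  assert (Hm : 0 < m) by (apply Hpos; lra).
  destruct (uniform_continuity_2d_1d' (fun t' u => speed x y u t') (-1) 1 0 Cu (mkposreal (m / 2) ltac:(lra))) as [dl Hdl].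
  exists (Rmin (dl / 2) eps0). split. apply Rmin_glb_lt; [destruct dl; simpl; lra | lra].
  split. apply Rmin_r.
  intros u t Hu Ht.
  destruct (Rle_or_lt 0 t) as [Ht0 | Ht0]. apply Hpos; lra.
  assert (Rmin (dl / 2) eps0 <= dl / 2) by apply Rmin_l.
  assert (0 < dl) by (destruct dl; simpl; lra).
  assert (A := Hdl u 0 u t Hu ltac:(lra) Hu ltac:(lra) ltac:(rewrite Rminus_eq_0, Rabs_R0; lra)).
  simpl in A. apply Rabs_def2 in A. specialize (Hmx u Hu). fold m in Hmx. lra.
Qed.


Lemma cont_pos (f : R -> R) c : continuous f c -> 0 < f c ->
  exists d, 0 < d /\ forall v, Rabs (v - c) < d -> 0 < f v.
Proof.
  intros H Hc.
  assert (HP : locally (f c) (fun w => Rabs (w - f c) < f c)).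
  { exists (mkposreal _ Hc). intros w Hw. exact Hw. }
  destruct (H _ HP) as [d Hd]. exists d. split. destruct d; simpl; lra.
  intros v Hv. specialize (Hd v Hv). simpl in Hd. apply Rabs_def2 in Hd. lra.
Qed.

Lemma slice_int t : 0 <= t < T -> exists lo hi, -1 - eps0 <= lo /\ lo < -1 /\ 1 < hi /\ hi <= 1 + eps0 /\
  forall u, lo < u < hi -> 0 < speed x y u t.
Proof.
  intros Ht.
  destruct (cont_pos _ (-1) (speed_cu (-1) t ltac:(lra) ltac:(lra)) (Hpos (-1) t ltac:(lra) Ht)) as [d1 [Hd1 P1]].
  destruct (cont_pos _ 1 (speed_cu 1 t ltac:(lra) ltac:(lra)) (Hpos 1 t ltac:(lra) Ht)) as [d2 [Hd2 P2]].
  exists (-1 - Rmin d1 eps0), (1 + Rmin d2 eps0).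
  assert (0 < Rmin d1 eps0) by (apply Rmin_glb_lt; lra).
  assert (0 < Rmin d2 eps0) by (apply Rmin_glb_lt; lra).
  assert (Rmin d1 eps0 <= d1) by apply Rmin_l. assert (Rmin d1 eps0 <= eps0) by apply Rmin_r.
  assert (Rmin d2 eps0 <= d2) by apply Rmin_l. assert (Rmin d2 eps0 <= eps0) by apply Rmin_r.
  repeat split; try lra.
  intros u Hu. destruct (Rle_or_lt u (-1)) as [h|h].
  - apply P1. rewrite Rabs_left1; lra.
  - destruct (Rle_or_lt u 1) as [h'|h'].
    + apply Hpos; lra.
    + apply P2. rewrite Rabs_right; lra.
Qed.

Lemma len_deriv del t : 0 < del -> del <= eps0 ->
  (forall u t, -1 <= u <= 1 -> - del < t < T -> 0 < speed x y u t) ->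
  - del < t < T ->
  is_derive (len x y) t (RInt (fun u => Derive (fun z => speed x y u z) t) (-1) 1).
Proof.
  intros Hd Hde Htube Ht.
  assert (MM : forall u, Rmin (-1) 1 <= u <= Rmax (-1) 1 -> -1 <= u <= 1).
  { intros u. rewrite Rmin_left, Rmax_right; lra. }
  apply (is_derive_RInt_param (fun z u => speed x y u z) (-1) 1 t).
  - apply (filter_imp (fun t' => - del < t' < T)). 2: apply locI; auto.
    intros t' Ht' u Hu. apply MM in Hu. eexists. apply speed_tderiv; try lra. apply Htube; auto.
  - intros u Hu. apply MM in Hu.
    apply continuity_2d_pt_ext_loc with (fun t' u' => dspeed u' t').
    + assert (L1 := locally_2d_rect (-1 - eps0) (1 + eps0) (- eps0) T t u ltac:(lra) ltac:(lra)).
      assert (L2 := continuity_2d_pt_neq_0 _ _ _ (speed_c2d u t ltac:(lra) ltac:(lra))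
                      (Rgt_not_eq _ _ (Htube u t Hu Ht))).
      apply locally_2d_impl with (2 := locally_2d_and _ _ _ _ L1 L2).
      apply locally_2d_forall. intros t' u' [[H1 H2] H3].
      symmetry. apply is_derive_unique. apply speed_tderiv; auto.
      assert (0 <= speed x y u' t') by apply sqrt_pos. lra.
    + apply dspeed_c2d; try lra. apply Htube; auto.
  - apply (filter_imp (fun t' => - del < t' < T)). 2: apply locI; auto.
    intros t' Ht'. apply exR. intros z Hz. apply MM in Hz. apply speed_cu; lra.
Qed.

End Flow.

Section Flow2.
Variables (x y : R -> R -> R) (T eps0 : R).
Hypothesis He : 0 < eps0.
Hypothesis HT : 0 < T.
Hypothesis SX : smooth_on_rect x (-1 - eps0) (1 + eps0) (- eps0) T.
Hypothesis SY : smooth_on_rect y (-1 - eps0) (1 + eps0) (- eps0) T.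
Hypothesis Hpos : forall u t, -1 <= u <= 1 -> 0 <= t < T -> 0 < speed x y u t.
Hypothesis Hflow : forall u t, -1 <= u <= 1 -> 0 <= t < T ->
     let V := curv_ss x y u t + / 2 * curv x y u t ^ 3
              - lam x y t * curv x y u t in
     pd 0 1 x u t = V * nu1 x y u t /\ pd 0 1 y u t = V * nu2 x y u t.

Definition Vel u t := curv_ss x y u t + / 2 * curv x y u t ^ 3 - lam x y t * curv x y u t.

Lemma flow_dspeed u t : -1 < u < 1 -> 0 <= t < T ->
  dspeed x y u t = Vel u t * curv x y u t * speed x y u t.
Proof.
  intros Hu Ht.
  assert (Hu0 : -1 - eps0 < u < 1 + eps0) by lra.
  assert (Ht0 : - eps0 < t < T) by lra.
  assert (CX := sm_Cinf x _ _ _ _ SX t Ht0).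
  assert (CY := sm_Cinf y _ _ _ _ SY t Ht0).
  assert (sx := sm_schwarz x _ _ _ _ SX u t Hu0 Ht0).
  assert (sy := sm_schwarz y _ _ _ _ SY u t Hu0 Ht0).
  assert (dX := Cinf_isd _ _ _ u (Cinf_Derive _ _ _ CX) Hu0).
  assert (dY := Cinf_isd _ _ _ u (Cinf_Derive _ _ _ CY) Hu0).
  assert (G := isd_plus _ _ _ _ _ (isd_mult _ _ _ _ _ dX sx) (isd_mult _ _ _ _ _ dY sy)).
  assert (G0 : is_derive (fun u' => Derive (fun u => x u t) u' * pd 0 1 x u' t
                                  + Derive (fun u => y u t) u' * pd 0 1 y u' t) u 0).
  { apply is_derive_ext_loc with (fun _ => 0). 2: apply isd_const.
    apply (filter_imp (fun u' => -1 < u' < 1)). 2: apply locI; auto.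
    intros u' Hu'. pose proof (Hflow u' t ltac:(lra) Ht) as HF. cbv zeta in HF. destruct HF as [E1 E2].
    rewrite E1, E2. unfold nu1, nu2, Ds.
    assert (0 < speed x y u' t) by (apply Hpos; lra).
    change (pd 1 0 x u' t) with (Derive (fun u => x u t) u').
    req; field. lra. }
  assert (Z : Derive (Derive (fun u => x u t)) u * pd 0 1 x u t + Derive (fun u => x u t) u * pd 1 1 x u t
     + (Derive (Derive (fun u => y u t)) u * pd 0 1 y u t + Derive (fun u => y u t) u * pd 1 1 y u t) = 0).
  { etransitivity; [symmetry; exact (is_derive_unique _ _ _ G) | exact (is_derive_unique _ _ _ G0)]. }
  pose proof (Hflow u t ltac:(lra) Ht) as HF. cbv zeta in HF. destruct HF as [E1 E2].
  assert (Hs := Hpos u t ltac:(lra) Ht).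
  assert (K : curv x y u t = (Derive (Derive (fun u => x u t)) u * Derive (fun u => y u t) u
              - Derive (fun u => x u t) u * Derive (Derive (fun u => y u t)) u) / speed x y u t ^ 3).
  { rewrite curv_eq. rewrite speed_eq. apply (kf_formula _ _ (-1) 1).
    apply (Cinf_restrict (-1 - eps0) (1 + eps0)); [lra|lra|exact CX].
    apply (Cinf_restrict (-1 - eps0) (1 + eps0)); [lra|lra|exact CY].
    intros v Hv. rewrite <- speed_eq. apply Hpos; lra. auto. }
  unfold dspeed. unfold Vel.
  rewrite E1, E2 in Z. unfold nu1, nu2, Ds in Z.
  change (pd 1 0 x u t) with (Derive (fun u => x u t) u).
  change (pd 1 0 y u t) with (Derive (fun u => y u t) u).
  set (V := curv_ss x y u t + / 2 * curv x y u t ^ 3 - lam x y t * curv x y u t) in *.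
  set (a := Derive (fun u => x u t) u) in *.
  set (b := Derive (fun u => y u t) u) in *.
  set (a' := Derive (Derive (fun u => x u t)) u) in *.
  set (b' := Derive (Derive (fun u => y u t)) u) in *.
  set (s := speed x y u t) in *.
  set (p := pd 1 1 x u t) in *. set (q := pd 1 1 y u t) in *.
  assert (Zs : a * p + b * q = V * (a' * b - a * b') / s).
  { assert (Z' : a' * (V * - (b / s)) + a * p + (b' * (V * (a / s)) + b * q) = 0) by exact Z.
    apply (Rmult_eq_reg_r s). 2: lra.
    replace (V * (a' * b - a * b') / s * s) with (V * (a' * b - a * b')) by (field; lra).
    replace (a' * (V * - (b / s))) with (- (V * a' * b) / s) in Z' by (field; lra).
    replace (b' * (V * (a / s))) with (V * a * b' / s) in Z' by (field; lra).
    apply (Rmult_eq_compat_r s) in Z'.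
    replace ((- (V * a' * b) / s + a * p + (V * a * b' / s + b * q)) * s) with
      (- (V * a' * b) + (a * p + b * q) * s + V * a * b') in Z' by (field; lra).
    rewrite Rmult_0_l in Z'. nra. }
  rewrite K. req. rewrite Zs. field. lra.
Qed.

End Flow2.

Section AtTime.
Variables (x y : R -> R -> R) (t lo hi th : R).
Hypothesis Hlo : lo < -1.
Hypothesis Hhi : 1 < hi.
Hypothesis CX : Cinf lo hi (fun u => x u t).
Hypothesis CY : Cinf lo hi (fun u => y u t).
Hypothesis Hsp : forall u, lo < u < hi -> 0 < speed x y u t.
Hypothesis Hbc1 : curv_s x y (-1) t = 0.
Hypothesis Hbc2 : curv_s x y 1 t = 0.
Hypothesis Hth : 0 < th.
Hypothesis Hw : arcint x y (curv x y) t = th.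

Let Hs' : forall u, lo < u < hi -> 0 < spd (fun u => x u t) (fun u => y u t) u.
Proof. exact Hsp. Qed.

Lemma Cs : Cinf lo hi (fun u => speed x y u t).
Proof. exact (spd_Cinf _ _ _ _ CX CY Hs'). Qed.
Lemma Ck : Cinf lo hi (fun u => curv x y u t).
Proof. exact (kf_Cinf _ _ _ _ CX CY Hs'). Qed.
Lemma Cks : Cinf lo hi (fun u => curv_s x y u t).
Proof. exact (dsf_Cinf _ _ _ _ CX CY Hs' _ (kf_Cinf _ _ _ _ CX CY Hs')). Qed.
Lemma Ckss : Cinf lo hi (fun u => curv_ss x y u t).
Proof. exact (dsf_Cinf _ _ _ _ CX CY Hs' _ (dsf_Cinf _ _ _ _ CX CY Hs' _ (kf_Cinf _ _ _ _ CX CY Hs'))). Qed.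

Lemma Dk u : lo < u < hi -> is_derive (fun u => curv x y u t) u (curv_s x y u t * speed x y u t).
Proof.
  intros Hu. eapply isd_eq. apply (Cinf_isd _ _ _ u Ck Hu).
  assert (H := Hsp u Hu). change (curv_s x y u t) with (Derive (fun u => curv x y u t) u / speed x y u t).
  req; field; lra.
Qed.
Lemma Dks u : lo < u < hi -> is_derive (fun u => curv_s x y u t) u (curv_ss x y u t * speed x y u t).
Proof.
  intros Hu. eapply isd_eq. apply (Cinf_isd _ _ _ u Cks Hu).
  assert (H := Hsp u Hu). change (curv_ss x y u t) with (Derive (fun u => curv_s x y u t) u / speed x y u t).
  req; field; lra.
Qed.

Lemma in11 z : Rmin (-1) 1 <= z <= Rmax (-1) 1 -> lo < z < hi.
Proof. rewrite Rmin_left, Rmax_right by lra. lra. Qed.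

Lemma ex11 (f : R -> R) : Cinf lo hi f -> ex_RInt f (-1) 1.
Proof. intros F. apply exR. intros z Hz. apply (Cinf_cont _ _ _ z F (in11 z Hz)). Qed.

Lemma L_pos : 0 < len x y t.
Proof.
  apply RInt_gt_0; try lra. intros; apply Hsp; lra.
  intros z Hz. apply (Cinf_cont _ _ _ z Cs); lra.
Qed.

Definition K2 := arcint x y (fun u t => curv x y u t ^ 2) t.
Definition K4 := arcint x y (fun u t => curv x y u t ^ 4) t.
Definition Sks := arcint x y (fun u t => curv_s x y u t ^ 2) t.

Lemma Sks_ge0 : 0 <= Sks.
Proof.
  apply RInt_ge_0; try lra. apply ex11. apply Cinf_mult. apply Cinf_pow, Cks. apply Cs.
  intros z Hz. apply Rmult_le_pos. apply pow2_ge_0. apply Rlt_le, Hsp; lra.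
Qed.
Lemma K4_ge0 : 0 <= K4.
Proof.
  apply RInt_ge_0; try lra. apply ex11. apply Cinf_mult. apply Cinf_pow, Ck. apply Cs.
  intros z Hz. apply Rmult_le_pos. replace (curv x y z t ^ 4) with ((curv x y z t ^ 2) ^ 2) by ring.
  apply pow2_ge_0. apply Rlt_le, Hsp; lra.
Qed.

Lemma K2_bound : th ^ 2 <= K2 * len x y t.
Proof.
  assert (W := wcs (fun u => curv x y u t) (fun _ => 1) (fun u => speed x y u t) (-1) 1 ltac:(lra)).
  rewrite <- Hw. unfold K2, arcint, len.
  replace (RInt (fun u => curv x y u t * speed x y u t) (-1) 1) with
    (RInt (fun z => curv x y z t * 1 * speed x y z t) (-1) 1).
  replace (RInt (fun u => speed x y u t) (-1) 1) with (RInt (fun z => 1 ^ 2 * speed x y z t) (-1) 1).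
  apply W.
  - intros z Hz; apply (Cinf_cont _ _ _ z Ck); lra.
  - intros z Hz; apply contR_const.
  - intros z Hz; apply (Cinf_cont _ _ _ z Cs); lra.
  - intros z Hz; apply Rlt_le, Hsp; lra.
  - apply RInt_extR. intros; req; ring.
  - apply RInt_extR. intros; req; ring.
Qed.

Lemma K2_pos : 0 < K2.
Proof.
  assert (H := K2_bound). assert (HL := L_pos).
  assert (0 < th ^ 2) by (apply pow_lt; lra).
  destruct (Rle_or_lt K2 0) as [h|h]; auto.
  assert (K2 * len x y t <= 0). { apply Rmult_le_0_r; lra. } lra.
Qed.

Lemma IBP : RInt (fun u => curv_ss x y u t * curv x y u t * speed x y u t) (-1) 1 = - Sks.
Proof.
  assert (D : forall z, Rmin (-1) 1 <= z <= Rmax (-1) 1 ->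
     is_derive (fun v => curv_s x y v t * curv x y v t) z
       (curv_ss x y z t * curv x y z t * speed x y z t + curv_s x y z t ^ 2 * speed x y z t)).
  { intros z Hz. assert (Hz' := in11 z Hz).
    eapply isd_eq. apply isd_mult. apply Dks; auto. apply Dk; auto. req; ring. }
  assert (C : forall z, Rmin (-1) 1 <= z <= Rmax (-1) 1 ->
     continuous (fun z => curv_ss x y z t * curv x y z t * speed x y z t + curv_s x y z t ^ 2 * speed x y z t) z).
  { intros z Hz. assert (Hz' := in11 z Hz).
    apply (Cinf_cont lo hi _ z); auto. apply Cinf_plus. apply Cinf_mult. apply Cinf_mult. apply Ckss. apply Ck. apply Cs.
    apply Cinf_mult. apply Cinf_pow, Cks. apply Cs. }
  assert (F := FTC_R _ _ (-1) 1 D C).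
  idtac. cbv beta in F. rewrite Hbc1, Hbc2 in F.
  rewrite RInt_plusR in F.
  - unfold Sks, arcint. change (RInt (fun u => curv_ss x y u t * curv x y u t * speed x y u t) (-1) 1 +
      RInt (fun u => curv_s x y u t ^ 2 * speed x y u t) (-1) 1 = 0 * curv x y 1 t - 0 * curv x y (-1) t) in F.
    lra.
  - apply ex11. apply Cinf_mult. apply Cinf_mult. apply Ckss. apply Ck. apply Cs.
  - apply ex11. apply Cinf_mult. apply Cinf_pow, Cks. apply Cs.
Qed.

Lemma zero_int : RInt (fun u => Vel x y u t * curv x y u t * speed x y u t) (-1) 1 = 0.
Proof.
  rewrite (RInt_extR _ (fun u => 1 * (curv_ss x y u t * curv x y u t * speed x y u t)
      + / 2 * (curv x y u t ^ 4 * speed x y u t) + (- lam x y t) * (curv x y u t ^ 2 * speed x y u t))).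
  2: { intros; unfold Vel; req; ring. }
  rewrite RInt_lin3.
  - rewrite IBP. fold (K4 ) . 
    change (1 * - Sks + / 2 * K4 + - lam x y t * K2 = 0).
    unfold lam. fold Sks. fold K4. fold K2. assert (H := K2_pos). req. field. lra.
  - apply ex11. apply Cinf_mult. apply Cinf_mult. apply Ckss. apply Ck. apply Cs.
  - apply ex11. apply Cinf_mult. apply Cinf_pow, Ck. apply Cs.
  - apply ex11. apply Cinf_mult. apply Cinf_pow, Ck. apply Cs.
Qed.


Lemma lam_lower : - (len x y t * Sks) / th ^ 2 <= lam x y t.
Proof.
  assert (H2 := K2_pos). assert (HB := K2_bound). assert (HS := Sks_ge0). assert (H4 := K4_ge0).
  assert (HL := L_pos). assert (Hth2 : 0 < th ^ 2) by (apply pow_lt; lra).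
  unfold lam. fold Sks K4 K2.
  apply Rle_trans with (- Sks / K2).
  - apply Rle_trans with (- Sks * / K2); [|unfold Rdiv; lra].
    unfold Rdiv. rewrite Ropp_mult_distr_l.
    assert (Sks / K2 <= len x y t * Sks / th ^ 2).
    { apply (Rmult_le_reg_r (K2 * th ^ 2)). apply Rmult_lt_0_compat; lra.
      replace (Sks / K2 * (K2 * th ^ 2)) with (Sks * th ^ 2) by (field; lra).
      replace (len x y t * Sks / th ^ 2 * (K2 * th ^ 2)) with (Sks * (K2 * len x y t)) by (field; lra).
      apply Rmult_le_compat_l; auto. }
    unfold Rdiv in H. lra.
  - unfold Rdiv. apply Rmult_le_compat_r. left; apply Rinv_0_lt_compat; lra. lra.
Qed.

Lemma lam_upper : lam x y t <= len x y t * Sks / 3 + kbar x y t ^ 2.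
Proof.
  assert (H2 := K2_pos). assert (HS := Sks_ge0). assert (HL := L_pos).
  set (L := len x y t). set (kb := kbar x y t). change (0 < L) in HL.
  set (B := L * Sks / 3 + kb ^ 2).
  assert (PB : forall u, -1 <= u <= 1 -> curv x y u t ^ 2 <= 2 * B).
  { intros u Hu.
    assert (P := pointwise_bound (fun u => curv x y u t) (fun u => curv_s x y u t) (fun u => speed x y u t) lo hi
       Hlo Hhi (fun v Hv => Cinf_cont _ _ _ v Cks Hv) (fun v Hv => Cinf_cont _ _ _ v Cs Hv) Dk Hsp u Hu).
    cbv zeta beta in P. change (RInt (fun v => speed x y v t) (-1) 1) with L in P.
    change (RInt (fun v => curv x y v t * speed x y v t) (-1) 1) with (arcint x y (curv x y) t) in P.
    change (RInt (fun v => curv_s x y v t ^ 2 * speed x y v t) (-1) 1) with Sks in P.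
    rewrite Hw in P.
    assert (Ekb : kb = th / L) by (unfold kb, kbar; rewrite Hw; reflexivity).
    assert (D : (curv x y u t - kb) ^ 2 <= L * Sks / 3).
    { rewrite Ekb. replace ((curv x y u t - th / L) ^ 2) with ((L * curv x y u t - th) ^ 2 / L ^ 2) by (field; lra).
      apply (Rmult_le_reg_r (L ^ 2)). apply pow_lt; lra.
      replace ((L * curv x y u t - th) ^ 2 / L ^ 2 * L ^ 2) with ((L * curv x y u t - th) ^ 2) by (field; lra).
      replace (L * Sks / 3 * L ^ 2) with (Sks * L ^ 3 / 3) by (field; lra). exact P. }
    assert (curv x y u t ^ 2 <= 2 * (curv x y u t - kb) ^ 2 + 2 * kb ^ 2).
    { assert (0 <= (curv x y u t - 2 * kb) ^ 2) by apply pow2_ge_0. nra. }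
    unfold B. lra. }
  assert (HB : 0 <= B) by (unfold B; assert (0 <= kb ^ 2) by apply pow2_ge_0;
     assert (0 <= L * Sks / 3) by (apply Rmult_le_pos; [apply Rmult_le_pos|]; lra); lra).
  assert (K4le : K4 <= 2 * B * K2).
  { unfold K4, K2, arcint. rewrite <- RInt_scalR.
    2: { apply ex11. apply Cinf_mult. apply Cinf_pow, Ck. apply Cs. }
    apply RInt_le; try lra.
    - apply ex11. apply Cinf_mult. apply Cinf_pow, Ck. apply Cs.
    - apply ex11. apply Cinf_mult. apply Cinf_const. apply Cinf_mult. apply Cinf_pow, Ck. apply Cs.
    - intros u Hu. assert (P := PB u ltac:(lra)). assert (Hs := Hsp u ltac:(lra)).
      cbv beta. replace (curv x y u t ^ 4 * speed x y u t) with
        ((curv x y u t ^ 2) * (curv x y u t ^ 2 * speed x y u t)) by ring.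
      apply Rmult_le_compat_r. apply Rmult_le_pos. apply pow2_ge_0. lra. exact P. }
  unfold lam. fold Sks K4 K2.
  apply (Rmult_le_reg_r K2); auto.
  replace ((- Sks + / 2 * K4) / K2 * K2) with (- Sks + / 2 * K4) by (field; lra).
  assert (0 <= K2 * (L * Sks / 3)) by (apply Rmult_le_pos; [lra|]; apply Rmult_le_pos; [apply Rmult_le_pos|]; lra).
  fold B. lra.
Qed.

End AtTime.

Theorem mainTheorem5 (th1 th2 T : R) (x y : R -> R -> R) :
  0 <= th2 -> th2 < th1 -> th1 < 2 * PI -> 0 < T ->
  elastic_flow_solution th1 th2 T x y ->
  forall t, 0 <= t < T ->
    - (len x y 0 * arcint x y (fun u t => curv_s x y u t ^ 2) t)
      / (2 * PI * ((th1 - th2) / (2 * PI))) ^ 2 <= lam x y t /\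
    lam x y t <= 2 * len x y 0 / PI * arcint x y (fun u t => curv_s x y u t ^ 2) t
                 + kbar x y t ^ 2.
Proof.
  intros H0 H12 H1pi HT Hsol t Ht.
  destruct Hsol as [[eps0 [He [SX SY]]] [Hpos [Hflow [Hbc Hw]]]].
  assert (Hth : 0 < th1 - th2) by lra.
  assert (SL : forall c, 0 <= c < T -> exists lo hi, lo < -1 /\ 1 < hi /\
      Cinf lo hi (fun u => x u c) /\ Cinf lo hi (fun u => y u c) /\
      (forall u, lo < u < hi -> 0 < speed x y u c)).
  { intros c Hc. destruct (slice_int x y T eps0 He SX SY Hpos c Hc) as [lo [hi [A [B [C [D E]]]]]].
    exists lo, hi. repeat split; auto.
    - apply (Cinf_restrict (-1 - eps0) (1 + eps0)); auto. apply (sm_Cinf x _ _ _ _ SX); lra.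
    - apply (Cinf_restrict (-1 - eps0) (1 + eps0)); auto. apply (sm_Cinf y _ _ _ _ SY); lra. }
  (* derivative of the length vanishes *)
  destruct (tube x y T eps0 He HT SX SY Hpos) as [del [Hd [Hde Htube]]].
  assert (DZ : forall c, 0 <= c < T -> RInt (fun u => Derive (fun z => speed x y u z) c) (-1) 1 = 0).
  { intros c Hc.
    destruct (SL c Hc) as [lo [hi [A [B [C [D E]]]]]].
    destruct (Hbc c Hc) as [_ [_ [_ [_ [_ [B1 B2]]]]]].
    rewrite (RInt_extR _ (fun u => Vel x y u c * curv x y u c * speed x y u c)).
    - apply (zero_int x y c lo hi (th1 - th2)); auto.
    - intros u Hu. rewrite Rmin_left, Rmax_right in Hu by lra.
      rewrite <- (flow_dspeed x y T eps0 He SX SY Hpos Hflow u c Hu Hc).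
      apply is_derive_unique. apply (speed_tderiv x y T eps0 SX SY); try lra. apply Hpos; lra. }
  assert (LC : len x y t = len x y 0).
  { destruct (MVT_gen (len x y) 0 t (fun c => RInt (fun u => Derive (fun z => speed x y u z) c) (-1) 1)) as [c [Hc E]].
    - intros c Hc. rewrite Rmin_left, Rmax_right in Hc by lra.
      apply (len_deriv x y T eps0 He SX SY del); auto; lra.
    - intros c Hc. rewrite Rmin_left, Rmax_right in Hc by lra.
      apply continuity_pt_filterlim.
      apply (@ex_derive_continuous R_AbsRing R_NormedModule).
      eexists. apply (len_deriv x y T eps0 He SX SY del); auto; lra.
    - rewrite Rmin_left, Rmax_right in Hc by lra. rewrite DZ in E by lra. lra. }
  destruct (SL t Ht) as [lo [hi [A [B [C [D E]]]]]].
  destruct (Hbc t Ht) as [_ [_ [_ [_ [_ [B1 B2]]]]]].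
  assert (Hwt := Hw t Ht).
  assert (Low : - (len x y t * Sks x y t) / (th1 - th2) ^ 2 <= lam x y t).
  { apply (lam_lower x y t lo hi (th1 - th2)); auto. }
  assert (Up : lam x y t <= len x y t * Sks x y t / 3 + kbar x y t ^ 2).
  { apply (lam_upper x y t lo hi (th1 - th2)); auto. }
  assert (HS : 0 <= Sks x y t) by (apply (Sks_ge0 x y t lo hi); auto).
  assert (HL : 0 < len x y t) by (apply (L_pos x y t lo hi); auto).
  unfold Sks in *. rewrite LC in Low, Up, HL.
  set (S := arcint x y (fun u t => curv_s x y u t ^ 2) t) in *.
  set (L := len x y 0) in *.
  assert (Hpi := PI_RGT_0). assert (Hpi4 := PI_4).
  split.
  - replace (2 * PI * ((th1 - th2) / (2 * PI))) with (th1 - th2) by (field; lra). exact Low.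
  - assert (L * S / 3 <= 2 * L / PI * S).
    { assert (Hq : 1 / 3 <= 2 / PI).
      { apply (Rmult_le_reg_r PI); auto. replace (2 / PI * PI) with 2 by (field; lra). lra. }
      replace (L * S / 3) with (L * S * (1 / 3)) by field.
      replace (2 * L / PI * S) with (L * S * (2 / PI)) by (field; lra).
      apply Rmult_le_compat_l; auto. apply Rmult_le_pos; lra. }
    lra.
Qed.
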